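(* Let $n\ge 6$ with $3\mid n$. Then the metric dimension of $H(n)$ is $n-\frac{n}{3}$.
   Context: For $n\ge 5$, $H(n)$ is the graph with vertex set $V_1\cup V_2$, where $V_1=\{v_1,\dots,v_n\}$ and $V_2=\{v_iv_j: 1\le i<j\le n\}$ (each $v_iv_j$ a single vertex), and where $v_r\in V_1$ is adjacent to $v_iv_j\in V_2$ iff $r=i$ or $r=j$; there are no other edges. $d(u,v)$ is the shortest-path distance. A set $Q$ of vertices is a resolving set of a graph $G$ if any two distinct vertices $x,y$ satisfy $(d(x,q))_{q\in Q}\neq(d(y,q))_{q\in Q}$; the metric dimension is the minimum size of a resolving set. *)

(* Defs.v *)
From mathcomp Require Import all_boot.
Set Implicit Arguments. Unset Strict Implicit. Unset Printing Implicit Defensive.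

Section Graphs.
Variable T : finType.
Variable e : rel T.

Fixpoint reach (k : nat) (u v : T) : bool :=
  match k with
  | 0 => u == v
  | k'.+1 => reach k' u v || [exists w, reach k' u w && e w v]
  end.

(* shortest-path distance: least k with reach k u v
   (equals #|T| if v is unreachable; irrelevant for connected graphs) *)
Definition dist (u v : T) : nat := find (fun k => reach k u v) (iota 0 #|T|).

Definition resolving (Q : {set T}) : Prop :=
  forall x y : T, x != y -> exists2 q, q \in Q & dist x q != dist y q.

Definition resolvingb (Q : {set T}) : bool :=
  [forall x, forall y, (x != y) ==> [exists q in Q, dist x q != dist y q]].

Definition metric_dim : nat :=
  \big[minn/#|T|]_(Q : {set T} | resolvingb Q) #|Q|.
End Graphs.

Definition Hvert (n : nat) : finType :=
  ('I_n + {p : 'I_n * 'I_n | p.1 < p.2})%type.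

Definition Hadj (n : nat) : rel (Hvert n) :=
  fun x y =>
    match x, y with
    | inl r, inr p => (r == (val p).1) || (r == (val p).2)
    | inr p, inl r => (r == (val p).1) || (r == (val p).2)
    | _, _ => false
    end.

Lemma resolvingP (T : finType) (e : rel T) (Q : {set T}) :
  reflect (resolving e Q) (resolvingb e Q).
Proof.
apply: (iffP forallP) => H.
- move=> x y nxy; have /forallP/(_ y)/implyP/(_ nxy)/exists_inP[q qQ hq] := H x.
  by exists q.
- move=> x; apply/forallP => y; apply/implyP => nxy.
  by have [q qQ hq] := H x y nxy; apply/exists_inP; exists q.
Qed.

(* Main.v *)
Require Import Defs.
From mathcomp Require Import all_boot zify.
Set Implicit Arguments. Unset Strict Implicit. Unset Printing Implicit Defensive.

Section Gen.
Variable T : finType.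
Variable e : rel T.

Lemma reach_mono k1 k2 u v : k1 <= k2 -> reach e k1 u v -> reach e k2 u v.
Proof.
elim: k2 => [|k IH]; first by rewrite leqn0 => /eqP->.
rewrite leq_eqVlt => /orP[/eqP-> //|hk] r; by rewrite /= IH.
Qed.

Lemma dist_le k u v : k < #|T| -> (dist e u v <= k) = reach e k u v.
Proof.
move=> hk; rewrite /dist.
case: (boolP (reach e k u v)) => Hk.
- rewrite leqNgt; apply/negP => hf.
  have := before_find 0 hf; by rewrite nth_iota // add0n Hk.
- apply/negP => hf.
  have hs : find (fun k => reach e k u v) (iota 0 #|T|) < size (iota 0 #|T|).
    by rewrite size_iota; apply: leq_ltn_trans hf hk.
  have := nth_find 0 (etrans (has_find _ _) hs).
  rewrite nth_iota ?add0n; last by rewrite size_iota in hs.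
  by move/(reach_mono hf); rewrite (negbTE Hk).
Qed.

Lemma dist_eq k u v : 0 < k < #|T| -> reach e k u v -> ~~ reach e k.-1 u v -> dist e u v = k.
Proof.
case/andP=> h0 hk r nr.
have h1 := dist_le u v hk; rewrite r in h1.
have h2 : k.-1 < #|T| by apply: leq_ltn_trans hk; exact: leq_pred.
have := dist_le u v h2; rewrite (negbTE nr) => h3.
apply/eqP; rewrite eqn_leq h1 /=; move: h3 h0; case: k {h1 hk h2 r nr} => // k /=.
by move/negbT; rewrite -ltnNge.
Qed.

Lemma dist_neq k x y q : k < #|T| -> reach e k x q != reach e k y q -> dist e x q != dist e y q.
Proof.
move=> hk hr; apply/negP => /eqP he; move: hr.
by rewrite -(dist_le x q hk) -(dist_le y q hk) he eqxx.
Qed.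
End Gen.
Section HG.
Variable n : nat.
Local Notation V := (Hvert n).
Local Notation E := {p : 'I_n * 'I_n | p.1 < p.2}.
Local Notation e := (@Hadj n).

Definition inp (r : 'I_n) (p : E) : bool := (r == (val p).1) || (r == (val p).2).

Lemma adj_ll r s : e (inl r) (inl s) = false. Proof. by []. Qed.
Lemma adj_rr (p q : E) : e (inr p) (inr q) = false. Proof. by []. Qed.
Lemma adj_lr r (p : E) : e (inl r) (inr p) = inp r p. Proof. by []. Qed.
Lemma adj_rl r (p : E) : e (inr p) (inl r) = inp r p. Proof. by []. Qed.

Lemma reach1 (u v : V) : reach e 1 u v = (u == v) || e u v.
Proof.
rewrite /=; congr (_ || _); apply/existsP/idP => [[w /andP[/eqP<- //]]|h].
by exists u; rewrite eqxx.
Qed.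

Lemma R0_rr (p q : E) : reach e 0 (inr p) (inr q) = (p == q). Proof. by []. Qed.
Lemma R0_lr r (p : E) : reach e 0 (inl r) (inr p) = false. Proof. by []. Qed.

Lemma R1_ll r s : reach e 1 (inl r) (inl s) = (r == s).
Proof. by rewrite reach1 orbF. Qed.
Lemma R1_lr r (p : E) : reach e 1 (inl r) (inr p) = inp r p.
Proof. by rewrite reach1. Qed.
Lemma R1_rl r (p : E) : reach e 1 (inr p) (inl r) = inp r p.
Proof. by rewrite reach1. Qed.
Lemma R1_rr (p q : E) : reach e 1 (inr p) (inr q) = (p == q).
Proof. by rewrite reach1 orbF. Qed.

Lemma reach2 (u v : V) : reach e 2 u v = reach e 1 u v || [exists w, reach e 1 u w && e w v].
Proof. by []. Qed.

Lemma R2_rr (p q : E) : reach e 2 (inr p) (inr q) = (p == q) || [exists r, inp r p && inp r q].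
Proof.
rewrite reach2 R1_rr; congr (_ || _); apply/existsP/existsP => [[[r|p']]|[r hr]].
- by rewrite R1_rl adj_lr => h; exists r.
- by rewrite adj_rr andbF.
- by exists (inl r); rewrite R1_rl adj_lr.
Qed.

Lemma R2_lr_out r (p : E) : ~~ inp r p -> reach e 2 (inl r) (inr p) = false.
Proof.
move=> np; rewrite reach2 R1_lr (negbTE np) orFb; apply/existsP => [[[a|p']]].
- by rewrite R1_ll adj_lr => /andP[/eqP<-]; apply/negP.
- by rewrite adj_rr andbF.
Qed.

Lemma exists_edge (i j : 'I_n) : i != j -> exists p : E, inp i p && inp j p.
Proof.
move=> hij; case: (ltngtP i j) => h.
- by exists (exist _ (i, j) h); rewrite /inp /= !eqxx orbT.
- by exists (exist _ (j, i) h); rewrite /inp /= !eqxx orbT.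
- by move/val_inj: h => h; rewrite h eqxx in hij.
Qed.

Lemma R2_ll r s : reach e 2 (inl r) (inl s).
Proof.
case: (eqVneq r s) => [->|hrs]; first by apply: (@reach_mono _ _ 0) => //=.
have [p /andP[h1 h2]] := exists_edge hrs.
rewrite reach2; apply/orP; right; apply/existsP; exists (inr p).
by rewrite R1_lr h1 adj_rl.
Qed.

Lemma reachS k (u v : V) : reach e k.+1 u v = reach e k u v || [exists w, reach e k u w && e w v].
Proof. by []. Qed.

Lemma R3_lr r (p : E) : reach e 3 (inl r) (inr p).
Proof.
rewrite reachS; apply/orP; right; apply/existsP; exists (inl (val p).1).
by rewrite R2_ll adj_lr /inp eqxx.
Qed.

Lemma cardV : n <= #|V|.
Proof. by rewrite /Hvert card_sum card_ord leq_addr. Qed.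

Hypothesis hn : 4 <= n.

Lemma cardV4 : 3 < #|V|.
Proof. exact: leq_trans hn cardV. Qed.

Lemma D_ll r s : r != s -> dist e (inl r) (inl s) = 2.
Proof.
move=> hrs; apply: dist_eq.
- by rewrite /= (leq_trans _ cardV4).
- exact: R2_ll.
- by rewrite R1_ll.
Qed.

Lemma D_lr r (p : E) : dist e (inl r) (inr p) = if inp r p then 1 else 3.
Proof.
case: ifP => h; apply: dist_eq.
- by rewrite /= (leq_trans _ cardV4).
- by rewrite R1_lr.
- by [].
- by rewrite /= (leq_trans _ cardV4).
- exact: R3_lr.
- by rewrite R2_lr_out // h.
Qed.

End HG.
Section LB.
Variable n : nat.
Hypothesis hn : 4 <= n.
Local Notation V := (Hvert n).
Local Notation E := {p : 'I_n * 'I_n | p.1 < p.2}.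
Local Notation e := (@Hadj n).
Variable Q : {set V}.
Hypothesis HQ : resolving e Q.

Definition A := [set r : 'I_n | inl r \in Q].
Definition B := [set p : E | inr p \in Q].
Definition deg r := #|[set p in B | inp r p]|.

Lemma card_ind (T : finType) (S : {set T}) : \sum_(x : T) (x \in S : nat) = #|S|.
Proof. rewrite -sum1_card [RHS]big_mkcond; apply: eq_bigr => x _; by case: (x \in S). Qed.

Lemma same_sig (r s : 'I_n) : r != s -> inl r \notin Q -> inl s \notin Q ->
  (forall p, p \in B -> inp r p = inp s p) -> False.
Proof.
move=> hrs nr ns H.
have [q qQ] := HQ (x := inl r) (y := inl s) hrs.
case: q qQ => [a|p] qQ.
- have har : r != a by apply/eqP => h; subst; rewrite qQ in nr.
  have has : s != a by apply/eqP => h; subst; rewrite qQ in ns.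
  by rewrite !D_ll // eqxx.
- by rewrite !D_lr // H ?eqxx // inE.
Qed.

Lemma ne12 (p : E) : (val p).1 != (val p).2.
Proof. by apply/eqP => h; move: (valP p); rewrite h ltnn. Qed.

Lemma sum_pair (f : 'I_n -> nat) (p : E) : \sum_(r | inp r p) f r = f (val p).1 + f (val p).2.
Proof.
rewrite (bigD1 (val p).1) /=; last by rewrite /inp eqxx.
rewrite (bigD1 (val p).2) /=; last by rewrite /inp eqxx orbT eq_sym ne12.
rewrite big1 ?addn0 // => r /andP[/andP[/orP[] /eqP-> h1 h2]].
- by rewrite eqxx in h1.
- by rewrite eqxx in h2.
Qed.

Lemma exch (w : 'I_n -> nat) : \sum_r w r * deg r = \sum_(p in B) \sum_(r | inp r p) w r.
Proof.
have Hd r : w r * deg r = \sum_(p | (p \in B) && inp r p) w r.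
  rewrite /deg -sum1_card big_distrr /=; apply: eq_big => [p|p _]; by rewrite ?inE ?muln1.
rewrite (eq_bigr _ (fun r _ => Hd r)).
under eq_bigr => r _ do rewrite big_mkcond.
rewrite exchange_big /= [RHS]big_mkcond /=; apply: eq_bigr => p _.
case: (p \in B); first by rewrite [RHS]big_mkcond.
by rewrite big1.
Qed.

Lemma LB : 2 * n <= 3 * #|Q| + 2.
Proof.
set L := [set r | (r \notin A) && (deg r == 1)].
set Z := [set r | (r \notin A) && (deg r == 0)].
have f x p : deg x == 0 -> p \in B -> inp x p = false.
  move=> /eqP /cards0_eq h pB'; apply/negP => hx.
  have : p \in [set p in B | inp x p] by rewrite inE pB' hx.
  by rewrite h inE.
have hZ : #|Z| <= 1.
  rewrite leqNgt; apply/card_gt1P => -[r [s [hr hs hrs]]].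
  move: hr hs; rewrite !inE => /andP[nr dr] /andP[ns ds].
  apply: (same_sig hrs) => // p pB.
  by rewrite !f.
have one x p : deg x == 1 -> p \in B -> inp x p -> forall p', p' \in B -> inp x p' -> p' = p.
  move=> /cards1P[p0 hp0] pB hx p' p'B hx'.
  have : p \in [set p in B | inp x p] by rewrite inE pB hx.
  have : p' \in [set p in B | inp x p] by rewrite inE p'B hx'.
  by rewrite hp0 !inE => /eqP-> /eqP->.
have hL p : p \in B -> ((val p).1 \in L) + ((val p).2 \in L) <= 1.
  move=> pB; case h1: ((val p).1 \in L); case h2 : ((val p).2 \in L) => //.
  exfalso; move: h1 h2; rewrite !inE => /andP[n1 d1] /andP[n2 d2].
  have i1 : inp (val p).1 p by rewrite /inp eqxx.
  have i2 : inp (val p).2 p by rewrite /inp eqxx orbT.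
  apply: (same_sig (ne12 p)) => // p' p'B; apply/idP/idP => h.
  - by rewrite (one _ _ d1 pB i1 p' p'B h).
  - by rewrite (one _ _ d2 pB i2 p' p'B h).
have hdeg : \sum_r deg r = 2 * #|B|.
  have := exch (fun _ => 1).
  under eq_bigr => r _ do rewrite mul1n.
  move=> ->; under eq_bigr => p _ do rewrite sum_pair.
  by rewrite sum_nat_const mulnC.
have hLB : #|L| <= #|B|.
  have := exch (fun r => (r \in L : nat)).
  have -> : \sum_r (r \in L : nat) * deg r = #|L|.
    rewrite -card_ind; apply: eq_bigr => r _; case h: (r \in L); last by rewrite mul0n.
    by rewrite mul1n; move: h; rewrite inE => /andP[_ /eqP->].
  move=> ->; rewrite -sum1_card; apply: leq_sum => p pB; rewrite sum_pair; exact: hL.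
have hQ : #|Q| = #|A| + #|B|.
  rewrite -!card_ind big_sumType /=; congr (_ + _); apply: eq_bigr => ? _; by rewrite inE.
have hv r : 2 <= 3 * (r \in A) + deg r + (r \in L) + 2 * (r \in Z).
  rewrite !inE; move: (deg r) => d; case: (inl r \in Q); case: d => [|[|d]] //=.
have : \sum_(r : 'I_n) 2 <= \sum_(r : 'I_n) (3 * (r \in A) + deg r + (r \in L) + 2 * (r \in Z)).
  by apply: leq_sum => r _; exact: hv.
rewrite sum_nat_const card_ord !big_split /= big1_eq !card_ind hdeg.
move: hZ hLB hQ; move: #|A| #|B| #|L| #|Z| #|Q| => a b l z q.
lia.
Qed.
End LB.
Definition tch (a x : nat) := (x == a) || (x == a.+1).

Lemma Tri m x t : x < 3 * m -> t < m -> (tch (3*t) x || tch (3*t).+1 x) = (x %/ 3 == t).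
Proof. rewrite /tch => *; lia. Qed.

Lemma SameL x y t : 3*t <= x < 3*t+3 -> 3*t <= y < 3*t+3 -> tch (3*t) x = tch (3*t) y -> tch (3*t).+1 x = tch (3*t).+1 y -> x = y.
Proof. rewrite /tch => *. lia. Qed.

Lemma tchF t x : ~~ (3*t <= x < 3*t+3) -> (tch (3*t) x = false) * (tch (3*t).+1 x = false).
Proof. rewrite /tch => *; split; lia. Qed.

Lemma ES_core ta tb tc td a b c d :
 3*ta <= a < 3*ta+3 -> 3*tb <= b < 3*tb+3 -> 3*tc <= c < 3*tc+3 -> 3*td <= d < 3*td+3 ->
 a < b -> c < d ->
 ~~((b == a.+1) && (a != 3*ta+2)) -> ~~((d == c.+1) && (c != 3*tc+2)) ->
 ((ta==ta) || (tb==ta)) = ((tc==ta) || (td==ta)) -> ((ta==tb) || (tb==tb)) = ((tc==tb) || (td==tb)) ->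
 ((ta==tc) || (tb==tc)) = ((tc==tc) || (td==tc)) -> ((ta==td) || (tb==td)) = ((tc==td) || (td==td)) ->
 (tch (3*ta) a || tch (3*ta) b) = (tch (3*ta) c || tch (3*ta) d) ->
 (tch (3*ta).+1 a || tch (3*ta).+1 b) = (tch (3*ta).+1 c || tch (3*ta).+1 d) ->
 (tch (3*tb) a || tch (3*tb) b) = (tch (3*tb) c || tch (3*tb) d) ->
 (tch (3*tb).+1 a || tch (3*tb).+1 b) = (tch (3*tb).+1 c || tch (3*tb).+1 d) ->
 a = c /\ b = d.
Proof.
move=> Ba Bb Bc Bd hab hcd nBa nBc T1 T2 T3 T4 ea1 ea2 eb1 eb2.
have [hlt|heq] : (ta < tb /\ tc = ta /\ td = tb) \/ (ta = tb /\ tc = ta /\ td = ta).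
  by clear ea1 ea2 eb1 eb2 nBa nBc; lia.
- case: hlt => hlt [etc etd]; subst tc td.
  have nb : ~~ (3*ta <= b < 3*ta+3) by clear -Bb hlt; lia.
  have nd : ~~ (3*ta <= d < 3*ta+3) by clear -Bd hlt; lia.
  have na : ~~ (3*tb <= a < 3*tb+3) by clear -Ba hlt; lia.
  have nc : ~~ (3*tb <= c < 3*tb+3) by clear -Bc hlt; lia.
  rewrite !(tchF nb) !(tchF nd) !orbF in ea1 ea2.
  rewrite !(tchF na) !(tchF nc) in eb1 eb2.
  split; [exact: (SameL Ba Bc) | exact: (SameL Bb Bd)].
- case: heq => e1 [e2 e3]; subst tb tc td.
  clear -Ba Bb Bc Bd hab hcd nBa nBc. lia.
Qed.

Lemma divb x : 3 * (x %/ 3) <= x < 3 * (x %/ 3) + 3.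
Proof. lia. Qed.
Lemma modb x : (x %% 3 != 2) = (x != 3 * (x %/ 3) + 2).
Proof. apply/idP/idP => h; lia. Qed.
Lemma m3a t : (3 * t) %% 3 != 2.
Proof. lia. Qed.
Lemma m3b t : (3 * t).+1 %% 3 != 2.
Proof. lia. Qed.
Lemma bnd3 m x : x < 3 * m -> (3 * (x %/ 3)).+1 < 3 * m.
Proof. lia. Qed.
Lemma bnd3b m x : x < 3 * m -> (3 * (x %/ 3)).+2 < 3 * m.
Proof. lia. Qed.
Lemma bndt m t : t < m -> (3 * t).+2 < 3 * m.
Proof. lia. Qed.
Lemma divlt m x : x < 3 * m -> x %/ 3 < m.
Proof. lia. Qed.

Lemma ES m a b c d : a < b -> b < 3*m -> c < d -> d < 3*m ->
  ~~ ((b == a.+1) && (a %% 3 != 2)) -> ~~ ((d == c.+1) && (c %% 3 != 2)) ->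
  (forall a0, a0 %% 3 != 2 -> a0.+1 < 3 * m -> (tch a0 a || tch a0 b) = (tch a0 c || tch a0 d)) ->
  a = c /\ b = d.
Proof.
move=> hab hb hcd hd nBa nBc H.
have ha : a < 3 * m by apply: ltn_trans hab hb.
have hc : c < 3 * m by apply: ltn_trans hcd hd.
have HT t : t < m -> ((a %/ 3 == t) || (b %/ 3 == t)) = ((c %/ 3 == t) || (d %/ 3 == t)).
  move=> ht.
  rewrite -(Tri ha ht) -(Tri hb ht) -(Tri hc ht) -(Tri hd ht).
  have h1 := H (3 * t) (m3a t) (ltnW (bndt ht)).
  have h2 := H (3 * t).+1 (m3b t) (bndt ht).
  move: h1 h2; do 8 case: (tch _ _) => //.
rewrite modb in nBa; rewrite modb in nBc.
apply: (ES_core (divb a) (divb b) (divb c) (divb d) hab hcd nBa nBc).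
- exact: HT (divlt ha).
- exact: HT (divlt hb).
- exact: HT (divlt hc).
- exact: HT (divlt hd).
- exact: H _ (m3a _) (bnd3 ha).
- exact: H _ (m3b _) (bnd3b ha).
- exact: H _ (m3a _) (bnd3 hb).
- exact: H _ (m3b _) (bnd3b hb).
Qed.

Lemma VS m r s : r < 3*m -> s < 3*m -> r != s -> exists a, [/\ a %% 3 != 2, a.+1 < 3*m & tch a r != tch a s].
Proof.
move=> hr hs hrs.
have hT : r %/ 3 < m by apply: divlt.
have [e1|e1] := boolP (tch (3 * (r %/3)) r == tch (3 * (r %/3)) s); last first.
  by exists (3 * (r %/3)); split => //; [exact: m3a | exact: bnd3].
have [e2|e2] := boolP (tch (3 * (r %/3)).+1 r == tch (3 * (r %/3)).+1 s); last first.
  by exists (3 * (r %/3)).+1; split => //; [exact: m3b | exact: bnd3b].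
case/negP: hrs; apply/eqP.
have hs3 : s %/ 3 = r %/ 3.
  by apply/eqP; rewrite -(Tri hs hT) -(eqP e1) -(eqP e2) (Tri hr hT) //.
by apply: (@SameL _ _ (r %/ 3)) => //; [exact: divb | rewrite -hs3; exact: divb | apply/eqP..].
Qed.

Lemma TS m r : r < 3 * m -> exists a, [/\ a %% 3 != 2, a.+1 < 3*m & tch a r].
Proof.
move=> hr; case: (boolP (r %% 3 != 2)) => h.
- by exists r; split => //; [lia | rewrite /tch eqxx].
- exists r.-1; split; [lia | lia | rewrite /tch; lia].
Qed.

Lemma count3 m : \sum_(0 <= i < 3 * m) (i %% 3 != 2 : nat) = 2 * m.
Proof.
elim: m => [|m IH]; first by rewrite big_geq.
rewrite (big_cat_nat (n := 3 * m)) //=; last by lia.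
rewrite IH (big_ltn (m := 3 * m)); last by lia.
rewrite (big_ltn (m := (3 * m).+1)); last by lia.
rewrite (big_ltn (m := (3 * m).+2)); last by lia.
rewrite big_geq; last by lia.
have -> : (3 * m) %% 3 = 0 by lia.
have -> : (3 * m).+1 %% 3 = 1 by lia.
have -> : (3 * m).+2 %% 3 = 2 by lia.
rewrite /=; lia.
Qed.
Section UB.
Variable m : nat.
Hypothesis hm : 2 <= m.
Local Notation N := (3 * m).
Local Notation V := (Hvert N).
Local Notation E := {p : 'I_N * 'I_N | p.1 < p.2}.
Local Notation e := (@Hadj N).

Lemma hN : 4 <= N. Proof. lia. Qed.

Definition isB (p : E) : bool :=
  (nat_of_ord (val p).2 == (nat_of_ord (val p).1).+1) && (nat_of_ord (val p).1 %% 3 != 2).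

Definition Q0 : {set V} := [set x : V | if x is inr p then isB p else false].

Lemma inpB (r : 'I_N) (q : E) : isB q -> inp r q = tch (val (val q).1) (val r).
Proof. by case/andP => /eqP h _; rewrite /inp /tch -h. Qed.

Lemma mkB a : a %% 3 != 2 -> a.+1 < N -> exists2 q : E, isB q & val (val q).1 = a.
Proof.
move=> h1 h2.
have h0 : a < N by apply: ltnW.
exists (exist _ (Ordinal h0, Ordinal h2) (ltnSn a)) => //.
by rewrite /isB /= eqxx h1.
Qed.

Lemma share (p q : E) : isB q ->
  [exists r, inp r p && inp r q] = tch (val (val q).1) (val (val p).1) || tch (val (val q).1) (val (val p).2).
Proof.
move=> hq; apply/existsP/orP => [[r /andP[/orP[] /eqP-> h]]|[h|h]].
- by left; rewrite -(inpB _ hq).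
- by right; rewrite -(inpB _ hq).
- by exists (val p).1; rewrite (inpB _ hq) h /inp eqxx.
- by exists (val p).2; rewrite (inpB _ hq) h /inp eqxx orbT.
Qed.

Lemma cardVN : 3 < #|V|.
Proof. exact: cardV4 hN. Qed.

Lemma sep_lr (r : 'I_N) (p : E) : exists2 q, q \in Q0 & dist e (inl r) q != dist e (inr p) q.
Proof.
case: (boolP (isB p)) => hp.
- exists (inr p); first by rewrite inE.
  by apply: (@dist_neq _ _ 0); [exact: ltn_trans cardVN | rewrite R0_lr R0_rr eqxx].
- have [a [h1 h2 h3]] := TS (ltn_ord r).
  have [q hq hqa] := mkB h1 h2.
  exists (inr q); first by rewrite inE.
  apply: (@dist_neq _ _ 1); first exact: ltn_trans cardVN.
  rewrite R1_lr R1_rr (inpB _ hq) hqa h3.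
  have -> : (p == q) = false by apply/eqP => h; rewrite h hq in hp.
  by [].
Qed.

Lemma resQ0 : resolving e Q0.
Proof.
move=> [r|p] [s|p'] hxy.
- have hrs : val r != val s by [].
  have [a [h1 h2 h3]] := VS (ltn_ord r) (ltn_ord s) hrs.
  have [q hq hqa] := mkB h1 h2.
  exists (inr q); first by rewrite inE.
  apply: (@dist_neq _ _ 1); first exact: ltn_trans cardVN.
  by rewrite !R1_lr !(inpB _ hq) hqa.
- exact: sep_lr.
- have [q hq hd] := sep_lr s p; exists q => //; by rewrite eq_sym.
- have hpp : p != p' by [].
  case: (boolP (isB p)) => hp.
    exists (inr p); first by rewrite inE.
    apply: (@dist_neq _ _ 0); [exact: ltn_trans cardVN | by rewrite !R0_rr eqxx [p' == p]eq_sym (negbTE hpp)].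
  case: (boolP (isB p')) => hp'.
    exists (inr p'); first by rewrite inE.
    apply: (@dist_neq _ _ 0); [exact: ltn_trans cardVN | by rewrite !R0_rr eqxx (negbTE hpp)].
  case: (boolP [exists a0 : 'I_N, (a0 %% 3 != 2) && (a0.+1 < N) &&
      ((tch a0 (val (val p).1) || tch a0 (val (val p).2)) != (tch a0 (val (val p').1) || tch a0 (val (val p').2)))]).
  + case/existsP => a0 /andP[/andP[h1 h2] h3].
    have [q hq hqa] := mkB h1 h2.
    exists (inr q); first by rewrite inE.
    apply: (@dist_neq _ _ 2); first exact: ltnW cardVN.
    rewrite !R2_rr !share // hqa.
    have -> : (p == q) = false by apply/negP => /eqP h; rewrite h hq in hp.
    by have -> : (p' == q) = false by apply/negP => /eqP h; rewrite h hq in hp'.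
  + move=> hne; exfalso; move/negP: hpp; apply.
    have [] := @ES m (val (val p).1) (val (val p).2) (val (val p').1) (val (val p').2)
      (valP p) (ltn_ord _) (valP p') (ltn_ord _) hp hp'.
    * move=> a0 h1 h2; apply/eqP; apply: contraNT hne => h3.
      by apply/existsP; exists (Ordinal (ltnW h2)); rewrite /= h1 h2 h3.
    * move=> e1 e2; apply/eqP/val_inj.
      rewrite [val p]surjective_pairing [val p']surjective_pairing.
      by congr pair; apply: val_inj.
Qed.

Lemma cardQ0 : #|Q0| = 2 * m.
Proof.
have h1 : #|Q0| = #|[set q : E | isB q]|.
  rewrite -!card_ind big_sumType /= big1 ?add0n => [|r _]; last by rewrite inE.
  by apply: eq_bigr => q _; rewrite !inE.
have h2 : #|[set q : E | isB q]| = #|[set i : 'I_N | i %% 3 != 2]|.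
  have hS : [set (val q).1 | q in [set q : E | isB q]] = [set i : 'I_N | i %% 3 != 2].
    apply/setP => i; rewrite inE; apply/imsetP/idP.
    - by case=> q; rewrite inE => /andP[_ h] ->.
    - move=> hi.
      have hi2 : i.+1 < N by move: (ltn_ord i) hi; clear; lia.
      have [q hq hqa] := mkB hi hi2.
      by exists q; [rewrite inE | apply: val_inj].
  rewrite -hS card_in_imset //.
  move=> q1 q2; rewrite !inE => /andP[/eqP e1 _] /andP[/eqP e2 _] h.
  apply: val_inj; rewrite [val q1]surjective_pairing [val q2]surjective_pairing h.
  by congr pair; apply: val_inj; rewrite /= e1 e2 h.
rewrite h1 h2 -card_ind.
rewrite -(count3 m) big_mkord.
by apply: eq_bigr => i _; rewrite inE.
Qed.
End UB.

Lemma bigmin_le (I : eqType) (r : seq I) (P : pred I) (F : I -> nat) c x :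
  x \in r -> P x -> \big[minn/c]_(i <- r | P i) F i <= F x.
Proof.
elim: r => // a r IH; rewrite inE big_cons => /orP[/eqP<- ->|xr px]; first exact: geq_minl.
case: (P a); [exact: leq_trans (geq_minr _ _) (IH xr px) | exact: IH].
Qed.

Theorem theorem3p7 (n : nat) (hn : 6 <= n) (h3 : 3 %| n) :
  metric_dim (@Hadj n) = n - n %/ 3.
Proof.
case/dvdnP: h3 => m hm; subst n.
have -> : m * 3 = 3 * m by rewrite mulnC.
have hm : 2 <= m by lia.
have -> : 3 * m - 3 * m %/ 3 = 2 * m by lia.
apply/eqP; rewrite eqn_leq; apply/andP; split.
- rewrite /metric_dim -(cardQ0 m); apply: bigmin_le; first exact: mem_index_enum.
  by apply/resolvingP; exact: resQ0.
- apply: (big_ind (fun x => 2 * m <= x)).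
  + apply: leq_trans (cardV _); lia.
  + by move=> x y hx hy; rewrite leq_min hx hy.
  + move=> Q /resolvingP HQ.
    have := LB (hN hm) HQ; lia.
Qed.
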